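(* Let two algebraically equivalent models (each one of the linear dynamic models described in the context) be written in stacked form as $$T_1x=v,\qquad T_2y=w,$$ where $x,y$ are zero-mean nonsingular Gaussian sequences over $[0,N]$, the nonsingular matrices $T_1,T_2$ are determined by the model parameters, and $v=[v_0',\ldots,v_N']'$, $w=[w_0',\ldots,w_N']'$ are the vectors of dynamic noise and boundary values with nonsingular covariances $\mathrm{Cov}(v)=P_1$, $\mathrm{Cov}(w)=P_2$. Then the sample paths of $v$ and $w$ are related by $$T_2'P_2^{-1}w=T_1'P_1^{-1}v .$$
   Context: Sequences are indexed by $[0,N]=(0,1,\ldots,N)$, $x_k\in\mathbb{R}^d$, $'$ denotes transpose. The models considered are linear dynamic models of the following types: forward/backward Markov, reciprocal, and forward/backward $CM_L$ and $CM_F$ models; each such model with its boundary condition can be written as $Tx=v$ with $T$ nonsingular and $v$ stacking the zero-mean Gaussian dynamic noise and boundary values. Two models $T_1x=v$, $T_2y=w$ are algebraically equivalent (AE) if $x=y$ (path-wise identical sequences). *)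

(* Defs.v *)
From HB Require Import structures.
From mathcomp Require Import all_boot all_order all_algebra.
From mathcomp Require Import all_classical all_reals all_analysis.
Set Implicit Arguments. Unset Strict Implicit. Unset Printing Implicit Defensive.
Import Order.TTheory GRing.Theory Num.Theory.
Local Open Scope classical_set_scope.
Local Open Scope ring_scope.

(* Zero-mean nonsingular Gaussian random vector X : T -> 'cV_n
   (Cramer-Wold characterisation): every nonzero linear combination u'X is a
   measurable real random variable whose law is the centred normal law
   N(0, s^2) with s > 0 (s > 0 for every u <> 0 = nonsingular covariance). *)
Definition zm_nonsing_gaussian {d} {T : measurableType d} {R : realType}
  (P : probability T R) (n : nat) (X : T -> 'cV[R]_n) : Prop :=
  forall u : 'cV[R]_n, u != 0 ->
    measurable_fun setT (fun w => (u^T *m X w) 0 0) /\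
    exists s : R, 0 < s /\
      forall A : set R, measurable A ->
        P ((fun w => (u^T *m X w) 0 0) @^-1` A) = normal_prob 0 s A.

Definition cov_mx {d} {T : measurableType d} {R : realType}
  (P : probability T R) (n : nat) (X : T -> 'cV[R]_n) : 'M[R]_n :=
  \matrix_(i, j) fine (covariance P (fun w => X w i 0) (fun w => X w j 0)).

(* Main.v *)
Require Import Defs.
From HB Require Import structures.
From mathcomp Require Import all_boot all_order all_algebra.
From mathcomp Require Import all_classical all_reals all_analysis.
From mathcomp Require Import ring lra measurable_realfun charge normal_distribution random_variable hoelder.
Import Order.TTheory GRing.Theory Num.Theory.
Local Open Scope classical_set_scope.
Local Open Scope ring_scope.

Lemma pdf_bound (R : realType) (s x : R) : s != 0 ->
  x ^+ 2 * normal_pdf 0 s x <=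
  (normal_peak s * (s ^+ 2 *+ 4) / normal_peak (s * Num.sqrt 2)) * normal_pdf 0 (s * Num.sqrt 2) x.
Proof.
move=> s0.
have s20 : s * Num.sqrt 2 != 0 by rewrite mulf_neq0 // sqrtr_eq0 -ltNge.
rewrite /normal_pdf (negbTE s0) (negbTE s20).
have hp : normal_peak (s * Num.sqrt 2) != 0 by rewrite gt_eqF // normal_peak_gt0.
set p' := normal_peak (s * Num.sqrt 2) in hp *.
rewrite [X in _ <= X](_ : _ = normal_peak s * (s ^+ 2 *+ 4 * normal_fun 0 (s * Num.sqrt 2) x)); last first.
  by field.
rewrite mulrCA; apply: ler_wpM2l; first exact: normal_peak_ge0.
rewrite /normal_fun subr0.
have s2 : s ^+ 2 != 0 by rewrite expf_neq0.
set u := x ^+ 2 / (s ^+ 2 *+ 4).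
have -> : (s * Num.sqrt 2) ^+ 2 *+ 2 = s ^+ 2 *+ 4.
  by rewrite exprMn sqr_sqrtr //; ring.
have -> : - x ^+ 2 / (s ^+ 2 *+ 4) = - u by rewrite /u mulNr.
have -> : - x ^+ 2 / (s ^+ 2 *+ 2) = - u + - u by rewrite /u; field.
have -> : x ^+ 2 = s ^+ 2 *+ 4 * u by rewrite /u; field.
rewrite expRD -mulrA; apply: ler_wpM2l.
  by rewrite mulrn_wge0 // sqr_ge0.
have u0 : 0 <= u by rewrite /u divr_ge0 ?sqr_ge0 ?mulrn_wge0 ?sqr_ge0.
rewrite mulrA ler_piMl ?expR_ge0 // expRN mulrC ler_pdivrMl ?expR_gt0 // mulr1.
by rewrite (le_trans _ (expR_ge1Dx u)) // lerDr.
Qed.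

Lemma normal_sq_fin (R : realType) (s : R) : s != 0 ->
  (\int[normal_prob 0 s]_x (x ^+ 2)%:E < +oo)%E.
Proof.
move=> s0.
have nd := normal_prob_dominates (0:R) s.
rewrite -(Radon_Nikodym_SigmaFinite.change_of_variables nd) //; last first.
- by apply/measurable_EFinP; exact: measurable_funX.
- by move=> x; rewrite lee_fin sqr_ge0.
set g := Radon_Nikodym_SigmaFinite.f _ _.
have ae : ae_eq lebesgue_measure setT g (fun x => (normal_pdf 0 s x)%:E).
  apply: integral_ae_eq => //.
  - exact: Radon_Nikodym_SigmaFinite.f_integrable.
  - by apply/measurable_EFinP; exact: measurable_normal_pdf.
  - move=> E _ mE; rewrite -Radon_Nikodym_SigmaFinite.f_integral //.
apply: (@le_lt_trans _ _ (\int[lebesgue_measure]_x ((x ^+ 2)%:E * (normal_pdf 0 s x)%:E))%E).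
  rewrite le_eqVlt; apply/orP; left; apply/eqP.
  apply: ae_eq_integral => //.
  - apply: emeasurable_funM.
      by apply/measurable_EFinP; exact: measurable_funX.
    exact: measurable_int (Radon_Nikodym_SigmaFinite.f_integrable nd).
  - apply/measurable_EFinP; apply: measurable_funM; first exact: measurable_funX.
    exact: measurable_normal_pdf.
  - exact: ae_eqe_mul2l.
have s20 : s * Num.sqrt 2 != 0 by rewrite mulf_neq0 // sqrtr_eq0 -ltNge.
set K := normal_peak s * (s ^+ 2 *+ 4) / normal_peak (s * Num.sqrt 2).
have K0 : 0 <= K by rewrite /K !mulr_ge0 ?normal_peak_ge0 ?invr_ge0 ?normal_peak_ge0 ?mulrn_wge0 ?sqr_ge0.
apply: (@le_lt_trans _ _ (\int[lebesgue_measure]_x (K%:E * (normal_pdf 0 (s * Num.sqrt 2) x)%:E))%E).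
  apply: ge0_le_integral => //.
  - by move=> x _; rewrite -EFinM lee_fin mulr_ge0 ?sqr_ge0 ?normal_pdf_ge0.
  - apply/measurable_EFinP; apply: measurable_funM; first exact: measurable_funX.
    exact: measurable_normal_pdf.
  - apply/measurable_EFinP; apply: measurable_funM => //.
    exact: measurable_normal_pdf.
  - by move=> x _; rewrite -!EFinM lee_fin pdf_bound.
rewrite (integralZl measurableT (integrable_normal_pdf 0 (s * Num.sqrt 2))).
by rewrite integral_normal_pdf mule1 ltry.
Qed.

Lemma gauss_L2 {d} {T : measurableType d} {R : realType} (P : probability T R) (X : T -> R) (s : R) :
  measurable_fun setT X -> 0 < s ->
  (forall A : set R, measurable A -> P (X @^-1` A) = normal_prob 0 s A) ->
  X \in Lfun P 2%:E.
Proof.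
move=> mX s0 hX.
rewrite inE; apply/andP; split; first by rewrite inE.
rewrite inE /= /finite_norm unlock /Lnorm.
apply: poweR_lty.
have e x : (`|(EFin \o X) x| `^ 2 = ((X x) ^+ 2)%:E)%E.
  by rewrite /= powR_mulrn ?normr_ge0 // real_normK ?num_real.
under eq_integral => x _ do rewrite e.
have mX' : measurable_fun setT (X : T -> measurableTypeR R) by exact: mX.
have := ge0_integral_pushforward mX' P (D := setT) (f := fun y => (y ^+ 2)%:E).
rewrite preimage_setT => <- //; last first.
- by move=> y _; rewrite lee_fin sqr_ge0.
- by apply/measurable_EFinP; exact: measurable_funX.
have -> : (\int[pushforward P (X : T -> measurableTypeR R)]_y (y ^+ 2)%:E = \int[normal_prob 0 s]_y (y ^+ 2)%:E)%E.
  apply: eq_measure_integral => A mA _.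
  by rewrite /pushforward; apply: hX.
by apply: normal_sq_fin; rewrite gt_eqF.
Qed.

Section covlin.
Context {d} {T : measurableType d} {R : realType} (P : probability T R).

Lemma sum_L2 (I : Type) (s : seq I) (a : I -> R) (X : I -> T -> R) :
  (forall k, X k \in Lfun P 2%:E) ->
  (fun om => \sum_(k <- s) a k * X k om) \in Lfun P 2%:E.
Proof.
move=> hX; elim: s => [|k s IH].
  have -> : (fun om => \sum_(k <- [::]) a k * X k om) = cst 0.
    by apply/funext => om; rewrite big_nil.
  exact: Lfun_cst.
have -> : (fun om => \sum_(j <- k :: s) a j * X j om) =
   (a k \o* X k \+ (fun om => \sum_(j <- s) a j * X j om))%R.
  by apply: funext => om /=; rewrite big_cons mulrC.
apply: rpredD; first by rewrite lee1n.
move=> H; have := @Lfun_scale _ _ _ P (X k) (a k) 2 (ler1n _ 2) (hX k). by [].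
by move=> H.
Qed.

Lemma cov_sum_l (I : Type) (s : seq I) (a : I -> R) (X : I -> T -> R) (Z : T -> R) :
  (forall k, X k \in Lfun P 2%:E) -> Z \in Lfun P 2%:E ->
  covariance P (fun om => \sum_(k <- s) a k * X k om) Z =
  (\sum_(k <- s) a k * fine (covariance P (X k) Z))%:E.
Proof.
move=> hX hZ.
have Pfin : P setT \is a fin_num := fin_num_measure P _ measurableT.
elim: s => [|k s IH].
  have -> : (fun om => \sum_(k <- [::]) a k * X k om) = cst 0.
    by apply/funext => om; rewrite big_nil.
  by rewrite covariance_cst_l big_nil.
have -> : (fun om => \sum_(j <- k :: s) a j * X j om) =
   (a k \o* X k \+ (fun om => \sum_(j <- s) a j * X j om))%R.
  by apply: funext => om /=; rewrite big_cons mulrC.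
rewrite covarianceDl //; last 2 first.
- by apply: Lfun_scale => //; rewrite ler1n.
- exact: sum_L2.
rewrite IH covarianceZl; last 3 first.
- exact: Lfun_subset12.
- exact: Lfun_subset12.
- exact: Lfun2_mul_Lfun1.
rewrite big_cons EFinD EFinM fineK //.
apply: covariance_fin_num.
- exact: Lfun_subset12.
- exact: Lfun_subset12.
- exact: Lfun2_mul_Lfun1.
Qed.

End covlin.

Lemma cov_mx_mul {d} {T : measurableType d} {R : realType} (P : probability T R)
  n (A : 'M[R]_n) (x : T -> 'cV[R]_n) :
  (forall i, (fun om => x om i 0) \in Lfun P 2%:E) ->
  cov_mx P (fun om => A *m x om) = A *m cov_mx P x *m A^T.
Proof.
move=> hx; apply/matrixP => i j; rewrite !mxE.
have e i' : (fun w => (A *m x w) i' 0) = (fun w => \sum_(k <- index_enum 'I_n) A i' k * x w k 0).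
  by apply: funext => w; rewrite mxE.
have L2 i' : (fun w => \sum_(k <- index_enum 'I_n) A i' k * x w k 0) \in Lfun P 2%:E.
  exact: (@sum_L2 _ _ _ P _ _ _ (fun k om => x om k 0)).
rewrite (e i) (e j) (@cov_sum_l _ _ _ P _ _ _ (fun k om => x om k 0) _ hx (L2 j)) /=.
under eq_bigr => k _ do rewrite covarianceC (@cov_sum_l _ _ _ P _ _ _ (fun k om => x om k 0) _ hx (hx k)) /=.
rewrite [RHS](eq_bigr (fun l => \sum_k A i k * cov_mx P x k l * A j l)); last first.
  by move=> l _; rewrite !mxE big_distrl.
rewrite exchange_big /=; apply: eq_bigr => k _.
rewrite big_distrr /=; apply: eq_bigr => l _.
rewrite mxE covarianceC; ring.
Qed.

Lemma aux_inv (R : comUnitRingType) n (M C : 'M[R]_n) (z : 'cV[R]_n) :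
  M \in unitmx -> M *m C *m M^T \in unitmx ->
  M^T *m invmx (M *m C *m M^T) *m (M *m z) = invmx C *m z.
Proof.
move=> uM uQ.
have uMT : M^T \in unitmx by rewrite unitmx_tr.
have uC : C \in unitmx by move: uQ; rewrite !unitmx_mul => /andP[/andP[]].
set Q := M *m C *m M^T in uQ *.
have hMC : M *m C = Q *m invmx M^T by rewrite /Q mulmxK.
have key : M^T *m invmx Q *m M = invmx C.
  apply: (can_inj (mulmxK uC)); rewrite mulVmx //=.
  by rewrite -mulmxA hMC mulmxA mulmxKV // mulmxV.
by rewrite mulmxA key.
Qed.

Theorem proposition3 (dT : measure_display) (T : measurableType dT)
  (R : realType) (P : probability T R) (d N : nat)
  (x y v w : T -> 'cV[R]_(N.+1 * d))
  (T1 T2 P1 P2 : 'M[R]_(N.+1 * d)) :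
  zm_nonsing_gaussian P x -> zm_nonsing_gaussian P y ->
  T1 \in unitmx -> T2 \in unitmx ->
  (forall om, T1 *m x om = v om) ->
  (forall om, T2 *m y om = w om) ->
  P1 = cov_mx P v -> P2 = cov_mx P w ->
  P1 \in unitmx -> P2 \in unitmx ->
  (* algebraic equivalence: the two models generate path-wise identical sequences *)
  (forall om, x om = y om) ->
  forall om, T2^T *m invmx P2 *m w om = T1^T *m invmx P1 *m v om.
Proof.
move=> gx gy uT1 uT2 hv hw eP1 eP2 uP1 uP2 exy om.
have hx i : (fun om => x om i 0) \in Lfun P 2%:E.
  have nz : delta_mx i 0 != 0 :> 'cV[R]_(N.+1 * d).
    apply/eqP => /matrixP /(_ i 0); rewrite !mxE !eqxx /=; exact/eqP/oner_neq0.
  have [mX [s [s0 hs]]] := gx _ nz.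
  have ee : (fun w => ((delta_mx i 0 : 'cV[R]_(N.+1 * d))^T *m x w) 0 0) = (fun w => x w i 0).
    by apply: funext => w'; rewrite trmx_delta -rowE mxE.
  rewrite ee in mX hs.
  exact: (@gauss_L2 _ _ _ P _ s mX s0 hs).
have ev : v = (fun om => T1 *m x om) by apply: funext => om'; rewrite hv.
have ew : w = (fun om => T2 *m x om) by apply: funext => om'; rewrite exy hw.
have e1 : P1 = T1 *m cov_mx P x *m T1^T by rewrite eP1 ev cov_mx_mul.
have e2 : P2 = T2 *m cov_mx P x *m T2^T by rewrite eP2 ew cov_mx_mul.
rewrite ew ev /= e1 e2.
rewrite e1 in uP1; rewrite e2 in uP2.
by rewrite !aux_inv.
Qed.
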